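(* Let $n\ge1$, let $\mathbf{Q}\in\mathbb{R}^{n\times n}$ be symmetric, $\mathbf{c}\in\mathbb{R}^n$, $\mathbf{v}\in\mathbb{R}^n_+$, $V_c>0$. Let $\mathcal{Z}_a=\{\mathbf{z}\in\{0,1\}^n:\ \mathbf{v}^T\mathbf{z}\le V_c\}$, $\mathcal{Z}_b=\{\mathbf{z}\in\mathbb{R}^n:\ \mathbf{v}^T\mathbf{z}\le V_c\}$, $P_q(\mathbf{z})=\tfrac12\mathbf{z}^T\mathbf{Q}\mathbf{z}-\mathbf{c}^T\mathbf{z}$, and for $\beta>0$, $P_\beta(\mathbf{z})=P_q(\mathbf{z})+\tfrac12\beta\|\mathbf{z}\circ\mathbf{z}-\mathbf{z}\|^2$. For $\boldsymbol{\zeta}=(\boldsymbol{\sigma},\tau)$ put $\mathbf{G}(\boldsymbol{\sigma})=\mathbf{Q}+2\,\mathrm{Diag}(\boldsymbol{\sigma})$, $\boldsymbol{\psi}(\boldsymbol{\zeta})=\mathbf{c}-\tau\mathbf{v}+\boldsymbol{\sigma}$, $\mathcal{S}_a^+=\{(\boldsymbol{\sigma},\tau)\in\mathbb{R}^{n+1}:\ \mathbf{G}(\boldsymbol{\sigma})\succ0,\ \tau>0\}$, $$\Xi_\beta(\mathbf{z},\boldsymbol{\zeta})=\tfrac12\mathbf{z}^T\mathbf{G}(\boldsymbol{\sigma})\mathbf{z}-\tfrac12\beta^{-1}\|\boldsymbol{\sigma}\|^2-\mathbf{z}^T\boldsymbol{\psi}(\boldsymbol{\zeta})-\tau V_c,$$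 $$P^d_\beta(\boldsymbol{\zeta})=-\tfrac12\boldsymbol{\psi}(\boldsymbol{\zeta})^T\mathbf{G}(\boldsymbol{\sigma})^{-1}\boldsymbol{\psi}(\boldsymbol{\zeta})-\tfrac12\beta^{-1}\|\boldsymbol{\sigma}\|^2-\tau V_c,\qquad P^d_q(\boldsymbol{\zeta})=-\tfrac12\boldsymbol{\psi}(\boldsymbol{\zeta})^T\mathbf{G}(\boldsymbol{\sigma})^{-1}\boldsymbol{\psi}(\boldsymbol{\zeta})-\tau V_c .$$ For any $\beta>0$, if $\boldsymbol{\zeta}_\beta=(\boldsymbol{\sigma}_\beta,\tau_\beta)\in\mathcal{S}_a^+$ is a solution of $\max\{P^d_\beta(\boldsymbol{\zeta}):\boldsymbol{\zeta}\in\mathcal{S}_a^+\}$, then $\mathbf{z}_\beta=\mathbf{G}(\boldsymbol{\sigma}_\beta)^{-1}\boldsymbol{\psi}(\boldsymbol{\zeta}_\beta)$ is a global minimizer of $P_\beta$ over $\mathcal{Z}_b$. Moreover, there exists $\beta_c>0$ such that if $\beta\ge\beta_c$ and $\mathbf{z}_\beta\in\mathcal{Z}_a$, then $\mathbf{z}_\beta$ is a global minimizer of $P_q$ over $\mathcal{Z}_a$ and $$P_q(\mathbf{z}_\beta)=\min_{\mathbf{z}\in\mathcal{Z}_b}P_\beta(\mathbf{z})=\Xi_\beta(\mathbf{z}_\beta,\boldsymbol{\zeta}_\beta)=\max_{\boldsymbol{\zeta}\in\mathcal{S}_a^+}P^d_\beta(\boldsymbol{\zeta})=P^d_q(\bo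ldsymbol{\zeta}_\beta).$$
   Context: $\mathbf{z}\circ\mathbf{z}=\{z_i^2\}$ is the componentwise square; $\mathrm{Diag}(\boldsymbol{\sigma})$ is the diagonal matrix with diagonal $\boldsymbol{\sigma}$. The problem $\min\{P_q(\mathbf{z}):\mathbf{z}\in\mathcal{Z}_a\}$ is the quadratic knapsack problem. *)

(* Defs.v *)
From HB Require Import structures.
From mathcomp Require Import all_boot all_order all_algebra.
From mathcomp Require Import reals.
Set Implicit Arguments. Unset Strict Implicit. Unset Printing Implicit Defensive.
Import Order.TTheory GRing.Theory Num.Theory.
Local Open Scope ring_scope.

Section Defs.
Variable R : realType.
Variable n : nat.

Definition dotv (u w : 'cV[R]_n) : R := \sum_(i < n) u i 0 * w i 0.

Definition qform (A : 'M[R]_n) (z : 'cV[R]_n) : R := (z^T *m A *m z) 0 0.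

Definition posdef (A : 'M[R]_n) : Prop := forall x : 'cV[R]_n, x != 0 -> 0 < qform A x.

Definition sqsub (z : 'cV[R]_n) : 'cV[R]_n := \col_i (z i 0 ^+ 2 - z i 0).

Definition Pq (Q : 'M[R]_n) (c z : 'cV[R]_n) : R := 2^-1 * qform Q z - dotv c z.

Definition Pbeta (Q : 'M[R]_n) (c : 'cV[R]_n) (beta : R) (z : 'cV[R]_n) : R :=
  Pq Q c z + 2^-1 * beta * dotv (sqsub z) (sqsub z).

Definition Gm (Q : 'M[R]_n) (sigma : 'cV[R]_n) : 'M[R]_n := Q + 2%:R *: diag_mx sigma^T.

Definition psi (c v sigma : 'cV[R]_n) (tau : R) : 'cV[R]_n := c - tau *: v + sigma.

Definition Saplus (Q : 'M[R]_n) (sigma : 'cV[R]_n) (tau : R) : Prop :=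
  posdef (Gm Q sigma) /\ 0 < tau.

Definition Za (v : 'cV[R]_n) (Vc : R) (z : 'cV[R]_n) : Prop :=
  (forall i, z i 0 = 0 \/ z i 0 = 1) /\ dotv v z <= Vc.

Definition Zb (v : 'cV[R]_n) (Vc : R) (z : 'cV[R]_n) : Prop := dotv v z <= Vc.

Definition Xi (Q : 'M[R]_n) (c v : 'cV[R]_n) (Vc beta : R)
    (z sigma : 'cV[R]_n) (tau : R) : R :=
  2^-1 * qform (Gm Q sigma) z - 2^-1 * beta^-1 * dotv sigma sigma
  - dotv z (psi c v sigma tau) - tau * Vc.

Definition Pdbeta (Q : 'M[R]_n) (c v : 'cV[R]_n) (Vc beta : R)
    (sigma : 'cV[R]_n) (tau : R) : R :=
  - 2^-1 * qform (invmx (Gm Q sigma)) (psi c v sigma tau)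
  - 2^-1 * beta^-1 * dotv sigma sigma - tau * Vc.

Definition Pdq (Q : 'M[R]_n) (c v : 'cV[R]_n) (Vc : R)
    (sigma : 'cV[R]_n) (tau : R) : R :=
  - 2^-1 * qform (invmx (Gm Q sigma)) (psi c v sigma tau) - tau * Vc.

Definition zsol (Q : 'M[R]_n) (c v sigma : 'cV[R]_n) (tau : R) : 'cV[R]_n :=
  invmx (Gm Q sigma) *m psi c v sigma tau.

End Defs.

(* Main.v *)
Require Import Defs.
From HB Require Import structures.
From mathcomp Require Import all_boot all_order all_algebra.
From mathcomp Require Import reals ring lra.
Import Order.TTheory GRing.Theory Num.Theory.
Set Implicit Arguments. Unset Strict Implicit. Unset Printing Implicit Defensive.
Local Open Scope ring_scope.

Lemma dotvE (R : realType) n (u w : 'cV[R]_n) : dotv u w = (u^T *m w) 0 0.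
Proof. by rewrite /dotv mxE; apply: eq_bigr => i _; rewrite mxE. Qed.

Lemma dotvC (R : realType) n (u w : 'cV[R]_n) : dotv u w = dotv w u.
Proof. by rewrite /dotv; apply: eq_bigr => i _; rewrite mulrC. Qed.

Lemma dotvDl (R : realType) n (u w x : 'cV[R]_n) : dotv (u + w) x = dotv u x + dotv w x.
Proof. by rewrite /dotv -big_split; apply: eq_bigr => i _; rewrite mxE mulrDl. Qed.

Lemma dotvZl (R : realType) n (a : R) (u x : 'cV[R]_n) : dotv (a *: u) x = a * dotv u x.
Proof. by rewrite /dotv mulr_sumr; apply: eq_bigr => i _; rewrite mxE mulrA. Qed.

Lemma dotvNl (R : realType) n (u x : 'cV[R]_n) : dotv (- u) x = - dotv u x.
Proof. by rewrite -scaleN1r dotvZl mulN1r. Qed.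

Lemma dotvDr (R : realType) n (u w x : 'cV[R]_n) : dotv x (u + w) = dotv x u + dotv x w.
Proof. by rewrite dotvC dotvDl !(dotvC x). Qed.
Lemma dotvZr (R : realType) n (a : R) (u x : 'cV[R]_n) : dotv x (a *: u) = a * dotv x u.
Proof. by rewrite dotvC dotvZl dotvC. Qed.
Lemma dotvNr (R : realType) n (u x : 'cV[R]_n) : dotv x (- u) = - dotv x u.
Proof. by rewrite dotvC dotvNl dotvC. Qed.
Lemma dotv0r (R : realType) n (x : 'cV[R]_n) : dotv x 0 = 0.
Proof. by rewrite /dotv big1 // => i _; rewrite mxE mulr0. Qed.

Lemma qformE (R : realType) n (A : 'M[R]_n) z : qform A z = dotv z (A *m z).
Proof. by rewrite /qform -mulmxA dotvE. Qed.

Lemma tr11 (R : realType) (M : 'M[R]_1) : M 0 0 = M^T 0 0.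
Proof. by rewrite mxE. Qed.

Lemma dotv_sym (R : realType) n (A : 'M[R]_n) (z w : 'cV[R]_n) :
  A^T = A -> dotv z (A *m w) = dotv w (A *m z).
Proof.
move=> hA; rewrite !dotvE.
by rewrite tr11 !trmx_mul trmxK hA mulmxA.
Qed.

Lemma posdef_unit (R : realType) n (A : 'M[R]_n) : posdef A -> A \in unitmx.
Proof.
move=> hA; rewrite -unitmx_tr unitmxE unitfE.
apply/negP; move/det0P => [x x0 hx].
have : x^T != 0 by apply: contra x0 => /eqP h; rewrite -(trmxK x) h linear0.
move=> /hA; rewrite qformE.
have -> : A *m x^T = 0 by rewrite -(trmxK A) -trmx_mul hx linear0.
by rewrite dotv0r ltxx.
Qed.

Lemma mulmx_inv (R : realType) n (A : 'M[R]_n) (p : 'cV[R]_n) :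
  A \in unitmx -> A *m (invmx A *m p) = p.
Proof. by move=> hA; rewrite mulmxA mulmxV // mul1mx. Qed.

Lemma CI (R : realType) n (A : 'M[R]_n) (p z : 'cV[R]_n) :
  A^T = A -> A \in unitmx ->
  2^-1 * qform A z - dotv z p =
  - 2^-1 * qform (invmx A) p + 2^-1 * qform A (z - invmx A *m p).
Proof.
move=> hs hu; set z0 := invmx A *m p.
have h0 : A *m z0 = p by apply: mulmx_inv.
rewrite !qformE mulmxBr h0 !(dotvDl, dotvNl, dotvDr, dotvNr).
rewrite (dotv_sym z0 z hs) h0 -/z0 (dotvC p z0).
lra.
Qed.

Lemma qformZ (R : realType) n (A : 'M[R]_n) (a : R) z :
  qform A (a *: z) = a ^+ 2 * qform A z.
Proof. by rewrite !qformE -scalemxAr dotvZl dotvZr mulrA expr2. Qed.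

Lemma qform0 (R : realType) n (A : 'M[R]_n) : qform A 0 = 0.
Proof. by rewrite qformE mulmx0 dotv0r. Qed.

Lemma qform_inv (R : realType) n (A : 'M[R]_n) e :
  A^T = A -> A \in unitmx -> qform (invmx A) e = qform A (invmx A *m e).
Proof.
move=> hs hu; rewrite !qformE mulmx_inv // dotvC //.
Qed.

Lemma CSb (R : realType) n (A : 'M[R]_n) (e w : 'cV[R]_n) (b : R) :
  A^T = A -> A \in unitmx -> (forall x, 0 <= qform A x) ->
  - 2^-1 * b ^+ 2 * qform (invmx A) e <= 2^-1 * qform A w + b * dotv e w.
Proof.
move=> hs hu hp.
have := CI (- b *: e) w hs hu.
rewrite dotvZr dotvC qformZ sqrrN => H.
have := hp (w - invmx A *m (- b *: e)).
lra.
Qed.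

Lemma Gm_sym (R : realType) n (Q : 'M[R]_n) sigma : Q^T = Q -> (Gm Q sigma)^T = Gm Q sigma.
Proof. by move=> hQ; rewrite /Gm linearD linearZ /= tr_diag_mx hQ. Qed.

Lemma qform_Gm (R : realType) n (Q : 'M[R]_n) sigma z :
  qform (Gm Q sigma) z = qform Q z + 2 * (dotv sigma (sqsub z) + dotv sigma z).
Proof.
rewrite !qformE /Gm mulmxDl dotvDr -scalemxAl dotvZr; congr (_ + _ * _).
rewrite mul_diag_mx /dotv -big_split; apply: eq_bigr => i _.
rewrite !mxE /=; ring.
Qed.

Lemma dotv_delta (R : realType) n (i : 'I_n) (x : 'cV[R]_n) :
  dotv (delta_mx i 0) x = x i 0.
Proof.
rewrite /dotv (bigD1 i) //= big1 ?addr0.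
  by rewrite mxE !eqxx mul1r.
by move=> j hj; rewrite mxE (negbTE hj) mul0r.
Qed.

Lemma XiE (R : realType) n (Q : 'M[R]_n) c v Vc beta z sigma tau :
  Xi Q c v Vc beta z sigma tau =
  2^-1 * qform Q z + dotv sigma (sqsub z) - 2^-1 * beta^-1 * dotv sigma sigma
  - dotv c z + tau * (dotv v z - Vc).
Proof.
rewrite /Xi qform_Gm /psi !(dotvDr, dotvNr, dotvZr) (dotvC z c) (dotvC z v) (dotvC z sigma).
lra.
Qed.

Lemma Xi_Pd (R : realType) n (Q : 'M[R]_n) c v Vc beta z sigma tau :
  Q^T = Q -> Gm Q sigma \in unitmx ->
  Xi Q c v Vc beta z sigma tau = Pdbeta Q c v Vc beta sigma tau
     + 2^-1 * qform (Gm Q sigma) (z - zsol Q c v sigma tau).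
Proof.
move=> hQ hu; have := CI (psi c v sigma tau) z (Gm_sym sigma hQ) hu.
rewrite /Xi /Pdbeta /zsol => H; lra.
Qed.

Lemma Pd_Xi (R : realType) n (Q : 'M[R]_n) c v Vc beta sigma tau :
  Q^T = Q -> Gm Q sigma \in unitmx ->
  Pdbeta Q c v Vc beta sigma tau = Xi Q c v Vc beta (zsol Q c v sigma tau) sigma tau.
Proof. by move=> hQ hu; rewrite Xi_Pd // subrr qform0 mulr0 addr0. Qed.
Lemma R0 (R : realType) (d K E : R) : 0 < d -> 0 <= K ->
  (forall t, -d <= t -> t <= d -> t * E <= t ^+ 2 * K) -> E = 0.
Proof.
move=> hd hK H.
have hE : 0 <= `|E| by [].
have hEE : E <= `|E| /\ - E <= `|E| by split; [exact: ler_norm | rewrite -normrN; exact: ler_norm].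
set D := `|E| + d * K + d.
have hD : 0 < D by rewrite /D; nra.
set t := d * E / D.
have htD : t * D = d * E by rewrite /t divfK // gt_eqF.
have ht1 : t <= d by rewrite -(ler_pM2r hD) htD /D; nra.
have ht2 : - d <= t by rewrite -(ler_pM2r hD) htD /D; nra.
have h1 := H t ht2 ht1.
have h2 : (t * E) * D ^+ 2 <= (t ^+ 2 * K) * D ^+ 2 by rewrite ler_pM2r // exprn_gt0.
have h3 : E ^+ 2 * (d * (`|E| + d)) <= 0.
  have e1 : (t * E) * D ^+ 2 = d * E * E * D by rewrite -htD; ring.
  have e2 : (t ^+ 2 * K) * D ^+ 2 = (d * E) ^+ 2 * K by rewrite -htD; ring.
  move: h2; rewrite e1 e2 /D; nra.
have h4 : 0 < d * (`|E| + d) by nra.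
have : E ^+ 2 <= 0 by rewrite -(ler_pM2r h4) mul0r.
by move=> h; apply/eqP; rewrite -sqrf_eq0 eq_le h sqr_ge0.
Qed.

Lemma posdef_ge0 (R : realType) n (A : 'M[R]_n) : posdef A -> forall x, 0 <= qform A x.
Proof.
move=> hA x; have [->|hx] := eqVneq x 0; first by rewrite qform0.
exact/ltW/hA.
Qed.

Lemma PI (R : realType) n (Q : 'M[R]_n) c v Vc beta sigb taub sig tau :
  Q^T = Q -> Saplus Q sigb taub -> Saplus Q sig tau ->
  Pdbeta Q c v Vc beta sig tau <= Pdbeta Q c v Vc beta sigb taub ->
  2^-1 * qform (Gm Q sigb) (zsol Q c v sig tau - zsol Q c v sigb taub)
  + dotv sig (sqsub (zsol Q c v sig tau)) - dotv sigb (sqsub (zsol Q c v sig tau))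
  - 2^-1 * beta^-1 * (dotv sig sig - dotv sigb sigb)
  + (tau - taub) * (dotv v (zsol Q c v sig tau) - Vc) <= 0.
Proof.
move=> hQ [hb _] [hs _] hle; set z' := zsol Q c v sig tau.
have hub := posdef_unit hb; have hus := posdef_unit hs.
move: hle; rewrite (Pd_Xi _ _ _ _ _ hQ hus) -/z'.
have := Xi_Pd c v Vc beta z' taub hQ hub.
rewrite !XiE => H1 H2.
lra.
Qed.

Lemma tau_stat (R : realType) n (Q : 'M[R]_n) c v Vc beta sigb taub :
  Q^T = Q -> Saplus Q sigb taub ->
  (forall sig tau, Saplus Q sig tau ->
     Pdbeta Q c v Vc beta sig tau <= Pdbeta Q c v Vc beta sigb taub) ->
  dotv v (zsol Q c v sigb taub) = Vc.
Proof.
move=> hQ hS hmax; have [hb htau] := hS.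
have hub := posdef_unit hb; have hsym := Gm_sym sigb hQ.
have hp := posdef_ge0 hb.
apply/eqP; rewrite -subr_eq0; apply/eqP.
apply: (@R0 _ (taub / 2) (2^-1 * qform (invmx (Gm Q sigb)) v)).
- lra.
- have := hp (invmx (Gm Q sigb) *m v); rewrite -qform_inv //; lra.
move=> t ht1 ht2.
have hS' : Saplus Q sigb (taub + t) by split => //; lra.
have := PI hQ hS hS' (hmax _ _ hS').
set z' := zsol Q c v sigb (taub + t); set zb := zsol Q c v sigb taub.
have := CSb v (z' - zb) t hsym hub hp.
rewrite dotvDr dotvNr => H1 H2.
lra.
Qed.

Lemma qform_Gm_delta (R : realType) n (Q : 'M[R]_n) sigb (i : 'I_n) (t : R) x :
  qform (Gm Q (sigb + t *: delta_mx i 0)) x = qform (Gm Q sigb) x + 2 * t * x i 0 ^+ 2.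
Proof.
rewrite !qform_Gm !(dotvDl, dotvZl) !dotv_delta mxE; ring.
Qed.

Lemma sig_stat (R : realType) n (Q : 'M[R]_n) c v Vc beta sigb taub (i : 'I_n) :
  Q^T = Q -> 0 < beta -> Saplus Q sigb taub ->
  (forall sig tau, Saplus Q sig tau ->
     Pdbeta Q c v Vc beta sig tau <= Pdbeta Q c v Vc beta sigb taub) ->
  sigb i 0 = beta * ((zsol Q c v sigb taub) i 0 ^+ 2 - (zsol Q c v sigb taub) i 0).
Proof.
move=> hQ hbeta hS hmax; have [hb htau] := hS.
have hub := posdef_unit hb; have hsym := Gm_sym sigb hQ.
have hp := posdef_ge0 hb.
set G := Gm Q sigb in hub hsym hp hb *.
set zb := zsol Q c v sigb taub.
set e := delta_mx i 0 : 'cV[R]_n.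
set g := qform (invmx G) e.
have hg : 0 < g.
  rewrite /g qform_inv //; apply: hb; apply/eqP => h0.
  have : G *m (invmx G *m e) = e by apply: mulmx_inv.
  rewrite h0 mulmx0 => /(congr1 (fun M : 'cV[R]_n => M i 0)).
  by rewrite /e !mxE !eqxx /= => /eqP; rewrite eq_sym oner_eq0.
set h := g^-1.
have hgh : h * g = 1 by rewrite /h mulVf // gt_eqF.
have hh : 0 < h by rewrite /h invr_gt0.
have L2 : forall x : 'cV[R]_n, x i 0 ^+ 2 * h <= qform G x.
  move=> x; have := CSb e x (- (x i 0 * h)) hsym hub hp.
  rewrite dotv_delta -/g => H.
  have e1 : (- (x i 0 * h)) ^+ 2 * g = x i 0 ^+ 2 * h * (h * g) by ring.
  rewrite hgh mulr1 in e1.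
  nra.
set ib := beta^-1.
have hib : beta * ib = 1 by rewrite /ib mulfV // gt_eqF.
set a := 2 * zb i 0 - 1.
have : ib * sigb i 0 = zb i 0 ^+ 2 - zb i 0.
  apply/eqP; rewrite eq_sym -subr_eq0; apply/eqP.
  apply: (@R0 _ (h / 4) (a ^+ 2 * g + 2^-1 * ib)).
  - lra.
  - have : 0 <= a ^+ 2 by apply: sqr_ge0.
    have : 0 < ib by rewrite /ib invr_gt0.
    nra.
  move=> t ht1 ht2.
  have hS' : Saplus Q (sigb + t *: e) taub.
    split => //= x hx; rewrite qform_Gm_delta -/G.
    have := L2 x; have := hb x hx; have : 0 <= x i 0 ^+ 2 by apply: sqr_ge0.
    nra.
  have := PI hQ hS hS' (hmax _ _ hS').
  set z' := zsol Q c v (sigb + t *: e) taub.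
  rewrite -/G -/zb !(dotvDl, dotvZl, dotvDr, dotvZr) !dotv_delta (dotvC sigb e) dotv_delta.
  clearbody z' zb.
  have ee : e i 0 = 1 by rewrite /e mxE !eqxx.
  rewrite ee subrr mul0r addr0 /sqsub !mxE -/ib.
  have := CSb e (z' - zb) (2 * t * a) hsym hub hp.
  rewrite dotv_delta -/g !mxE => H1.
  have := L2 (z' - zb); rewrite !mxE => H3.
  have : 0 <= (h / 4 + t) * (z' i 0 - zb i 0) ^+ 2.
    apply: mulr_ge0; [lra | exact: sqr_ge0].
  rewrite /a in H1 *.
  move=> H4 H2.
  lra.
move=> H; rewrite -H mulrA hib mul1r //.
Qed.

Lemma dotv_ge0 (R : realType) n (u : 'cV[R]_n) : 0 <= dotv u u.
Proof. by rewrite /dotv; apply: sumr_ge0 => i _; rewrite -expr2 sqr_ge0. Qed.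

Lemma sqsub0 (R : realType) n (z : 'cV[R]_n) :
  (forall i, z i 0 = 0 \/ z i 0 = 1) -> sqsub z = 0.
Proof.
move=> H; apply/matrixP => i j; rewrite !mxE.
by case: (H i) => ->; rewrite expr2 ?mul0r ?mul1r subrr.
Qed.

Lemma part1 (R : realType) n (Q : 'M[R]_n) c v Vc beta sigb taub :
  Q^T = Q -> 0 < beta -> Saplus Q sigb taub ->
  (forall sig tau, Saplus Q sig tau ->
     Pdbeta Q c v Vc beta sig tau <= Pdbeta Q c v Vc beta sigb taub) ->
  let zb := zsol Q c v sigb taub in
  [/\ Zb v Vc zb, sigb = beta *: sqsub zb,
      (forall z, Zb v Vc z -> Pbeta Q c beta zb <= Pbeta Q c beta z),
      Pbeta Q c beta zb = Xi Q c v Vc beta zb sigb taub &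
      Xi Q c v Vc beta zb sigb taub = Pdbeta Q c v Vc beta sigb taub].
Proof.
move=> hQ hbeta hS hmax zb.
have htau := tau_stat hQ hS hmax.
have hsv : sigb = beta *: sqsub zb.
  apply/matrixP => i j; rewrite (ord1 j) [in RHS]mxE /sqsub [in RHS]mxE.
  exact: (sig_stat _ hQ hbeta hS hmax).
have [hb htp] := hS.
have hub := posdef_unit hb; have hp := posdef_ge0 hb.
have hib : beta * beta^-1 = 1 by rewrite mulfV // gt_eqF.
have e1 : Pbeta Q c beta zb = Xi Q c v Vc beta zb sigb taub.
  rewrite XiE /Pbeta /Pq -/zb htau hsv dotvZl !dotvZr dotvZl /=.
  have : beta * (beta * beta^-1) = beta by rewrite hib mulr1.
  move: (dotv (sqsub zb) (sqsub zb)) => Y.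
  move=> _; have -> : 2^-1 / beta * (beta * (beta * Y)) = 2^-1 * beta * Y by field; rewrite gt_eqF.
  lra.
have e2 : Xi Q c v Vc beta zb sigb taub = Pdbeta Q c v Vc beta sigb taub.
  by rewrite Pd_Xi.
split => //.
- by rewrite /Zb htau.
move=> z hz.
have h1 : Xi Q c v Vc beta z sigb taub <= Pbeta Q c beta z.
  rewrite XiE /Pbeta /Pq hsv dotvZl !dotvZr dotvZl.
  have := dotv_ge0 (sqsub z - sqsub zb).
  rewrite !(dotvDl, dotvDr, dotvNl, dotvNr) (dotvC (sqsub zb) (sqsub z)) /Zb in hz *.
  idtac.
  have : beta * (beta * beta^-1) = beta by rewrite hib mulr1.
  move=> hbb hY.
  have : 0 <= taub * (Vc - dotv v z) by apply: mulr_ge0; lra.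
  have -> : 2^-1 / beta * (beta * (beta * dotv (sqsub zb) (sqsub zb))) = 2^-1 * beta * dotv (sqsub zb) (sqsub zb) by field; rewrite gt_eqF.
  have := mulr_ge0 (ltW hbeta) hY. lra.
have h2 := Xi_Pd c v Vc beta z taub hQ hub.
have := hp (z - zb); rewrite -/zb in h2.
lra.
Qed.

Theorem theorem2 (R : realType) (n : nat) (hn : (1 <= n)%N)
    (Q : 'M[R]_n) (c v : 'cV[R]_n) (Vc : R)
    (hQ : Q^T = Q) (hv : forall i, 0 <= v i 0) (hVc : 0 < Vc) :
  (forall (beta : R) (sigb : 'cV[R]_n) (taub : R),
      0 < beta ->
      Saplus Q sigb taub ->
      (forall sig tau, Saplus Q sig tau ->
          Pdbeta Q c v Vc beta sig tau <= Pdbeta Q c v Vc beta sigb taub) ->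
      Zb v Vc (zsol Q c v sigb taub) /\
      (forall z, Zb v Vc z ->
          Pbeta Q c beta (zsol Q c v sigb taub) <= Pbeta Q c beta z))
  /\
  (exists betac : R, 0 < betac /\
    forall (beta : R) (sigb : 'cV[R]_n) (taub : R),
      betac <= beta ->
      Saplus Q sigb taub ->
      (forall sig tau, Saplus Q sig tau ->
          Pdbeta Q c v Vc beta sig tau <= Pdbeta Q c v Vc beta sigb taub) ->
      Za v Vc (zsol Q c v sigb taub) ->
      let zb := zsol Q c v sigb taub in
      (forall z, Za v Vc z -> Pq Q c zb <= Pq Q c z) /\
      (forall z, Zb v Vc z -> Pbeta Q c beta zb <= Pbeta Q c beta z) /\
      Pq Q c zb = Pbeta Q c beta zb /\
      Pbeta Q c beta zb = Xi Q c v Vc beta zb sigb taub /\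
      Xi Q c v Vc beta zb sigb taub = Pdbeta Q c v Vc beta sigb taub /\
      Pdbeta Q c v Vc beta sigb taub = Pdq Q c v Vc sigb taub).
Proof.
split.
  move=> beta sigb taub hb hS hmax.
  by have [? ? ? ? ?] := part1 hQ hb hS hmax.
exists 1; split => // beta sigb taub hb1 hS hmax hZa zb.
have hb : 0 < beta by lra.
have [hZb hsv hmin e1 e2] := part1 hQ hb hS hmax.
have hy : sqsub zb = 0 by apply: sqsub0; case: hZa.
have hPq : forall z, sqsub z = 0 -> Pq Q c z = Pbeta Q c beta z.
  by move=> z hz; rewrite /Pbeta hz dotv0r mulr0 addr0.
split.
  move=> z [hz01 hzV].
  rewrite (hPq _ hy) (hPq _ (sqsub0 hz01)); exact: hmin.
split => //; split; first exact: hPq.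
split => //; split => //.
by rewrite /Pdbeta /Pdq hsv hy scaler0 dotv0r mulr0 subr0.
Qed.
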